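(* Let $\mathcal{M}=(M_i\colon i\in K)$ be a family of matroids on a common ground set $E$, let $\mathcal{F}=(\langle I_i,S_i\rangle\colon i\in K)$ be feasible with respect to $\mathcal{M}$, let $X$ be $\mathcal{M}(\mathcal{F})$-tight, and let $(R_i\colon i\in K)$ be a covering of $\mathcal{M}(\mathcal{F})\restriction X$. Then $\mathcal{F}'=(\langle I_i\cup R_i,S_i\rangle\colon i\in K)$ is a feasible extension of $\mathcal{F}$ with respect to $\mathcal{M}$, and $I_i\cup R_i$ spans $X\cap S_i$ in $M_i$ for every $i\in K$. Furthermore, if $X$ is the $\subseteq$-largest $\mathcal{M}(\mathcal{F})$-tight set, then there is no non-empty $\mathcal{M}(\mathcal{F}')$-tight set.
   Context: Matroids are possibly infinite (independence axioms: $\emptyset$ independent, closure under subsets, augmentation relative to maximal independent sets, and every independent subset of any $X\subseteq E$ extends to a maximal independent subset of $X$). Circuits are minimal dependent sets; $X$ spans $e$ if $e\in X$ or some circuit $C\ni e$ has $C\setminus\{e\}\subseteq X$; a set is spanning if it spans the whole ground set. Minors: $M\restriction X=(X,\mathcal{I}\cap\mathcal{P}(X))$, $M\setminus X=M\restriction(E\setminus X)$, $M^*$ is the matroid whose bases are the complements of bases of $M$, and $M/X=(M^*\setminus X)^*$. Declaring the elements of $X$ to be loops gives $M\setminus X\oplus(X,\{\emptyset\})$. For a family $(N_i\colon i\in K)$ on a set $Y$: a covering is $(R_i)$ with $R_i$ independent in $N_i$ and $\bigcup R_i=Y$; a packing is $(P_i)$ pairwise disjoint with $P_i$ spanning in $N_i$;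 the family is tight if it admits a covering and every covering has each $R_i$ spanning in $N_i$; $X\subseteq Y$ is tight (w.r.t. the family) if $(N_i\restriction X)$ is tight. Consider families $\mathcal{F}=(\langle I_i,S_i\rangle\colon i\in K)$ with $I_i\subseteq S_i\subseteq E$, $I_i$ independent and $S_i$ spanning in $M_i$, $I_i\cap I_j=\emptyset$ for $i\neq j$, and $\bigcup_i S_i=E$. $\mathcal{F}$ is covering-feasible if there is a covering $(R_i)$ of $\mathcal{M}$ with $I_i\subseteq R_i\subseteq S_i$, packing-feasible if there is a packing $(P_i)$ of $\mathcal{M}$ with $I_i\subseteq P_i\subseteq S_i$, and feasible if both. $\mathcal{F}'=(\langle I_i',S_i'\rangle)$ is an extension of $\mathcal{F}$ if $I_i\subseteq I_i'\subseteq S_i'\subseteq S_i$ for all $i$. $\mathcal{M}(\mathcal{F})=(M_i(\mathcal{F})\colon i\in K)$, where $M_i(\mathcal{F})$ is the matroid on $E\setminus\bigcup_{j\in K}I_j$ obtained from $M_i$ by contracting $I_i$, deleting $\bigcup_{j\neq i}I_j$, and declaring the remaining elements not in $S_i$ to be loops. *)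

(* Defs.v *)
From mathcomp Require Import all_boot.
From mathcomp Require Import boolp classical_sets.
Set Implicit Arguments. Unset Strict Implicit. Unset Printing Implicit Defensive.
Local Open Scope classical_set_scope.

Record matroid (T : Type) := Matroid {
  mground : set T;
  mindep  : set (set T) }.

Section Matroids.
Variable T : Type.
Implicit Types (M : matroid T) (X Y I J B C : set T).

Definition maxindep_in M X B :=
  [/\ B `<=` X, mindep M B &
      forall B', mindep M B' -> B `<=` B' -> B' `<=` X -> B' = B].

Definition is_base M B := maxindep_in M (mground M) B.

Definition is_matroid M :=
  [/\ (forall I, mindep M I -> I `<=` mground M),
      mindep M set0,
      (forall I J, mindep M J -> I `<=` J -> mindep M I),
      (forall I B, mindep M I -> ~ is_base M I -> is_base M B ->
         exists2 x, x \in B `\` I & mindep M (x |` I)) &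
      (forall X I, X `<=` mground M -> mindep M I -> I `<=` X ->
         exists B, I `<=` B /\ maxindep_in M X B)].

Definition is_circuit M C :=
  [/\ C `<=` mground M, ~ mindep M C &
      forall D, D `<=` C -> D <> C -> mindep M D].

Definition spans M X (e : T) :=
  e \in X \/ exists C, [/\ is_circuit M C, e \in C & C `\ e `<=` X].

Definition spanning M X :=
  X `<=` mground M /\ forall e, e \in mground M -> spans M X e.

Definition mrestrict M X : matroid T :=
  Matroid X (fun I => mindep M I /\ I `<=` X).
Definition mdelete M X : matroid T := mrestrict M (mground M `\` X).
Definition mdual M : matroid T :=
  Matroid (mground M)
          (fun I => exists B, is_base M B /\ I `<=` mground M `\` B).
Definition mcontract M X : matroid T := mdual (mdelete (mdual M) X).
(* M \ X (+) (X, {emptyset}) *)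
Definition mloops M X : matroid T :=
  Matroid ((mground M `\` X) `|` X)
          (fun I => mindep M I /\ I `<=` mground M `\` X).

End Matroids.

Section Families.
Variables (T K : Type).
Implicit Types (N : K -> matroid T) (Y X : set T).

Definition is_covering N Y (R : K -> set T) :=
  (forall i, mindep (N i) (R i)) /\ \bigcup_i R i = Y.

Definition is_packing N (P : K -> set T) :=
  (forall i j, i <> j -> P i `&` P j = set0) /\
  (forall i, spanning (N i) (P i)).

Definition tight_family N Y :=
  (exists R, is_covering N Y R) /\
  (forall R, is_covering N Y R -> forall i, spanning (N i) (R i)).

Definition tight_set N Y X :=
  X `<=` Y /\ tight_family (fun i => mrestrict (N i) X) X.

(* A family F = (<I_i, S_i> : i in K) is given by two maps FI, FS. *)
Definition is_family (M : K -> matroid T) E (FI FS : K -> set T) :=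
  [/\ (forall i, FI i `<=` FS i /\ FS i `<=` E),
      (forall i, mindep (M i) (FI i)),
      (forall i, spanning (M i) (FS i)),
      (forall i j, i <> j -> FI i `&` FI j = set0) &
      \bigcup_i FS i = E].

Definition covering_feasible (M : K -> matroid T) E (FI FS : K -> set T) :=
  exists R, is_covering M E R /\ forall i, FI i `<=` R i /\ R i `<=` FS i.

Definition packing_feasible (M : K -> matroid T) (FI FS : K -> set T) :=
  exists P, is_packing M P /\ forall i, FI i `<=` P i /\ P i `<=` FS i.

Definition feasible (M : K -> matroid T) E FI FS :=
  covering_feasible M E FI FS /\ packing_feasible M FI FS.

Definition is_extension (FI FS FI' FS' : K -> set T) :=
  forall i, [/\ FI i `<=` FI' i, FI' i `<=` FS' i & FS' i `<=` FS i].

(* M_i(F): contract I_i, delete the other I_j, declare the remaining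
   elements outside S_i to be loops.  Ground set: E \ U_j I_j. *)
Definition minorF (M : K -> matroid T) (FI FS : K -> set T) (i : K) :
    matroid T :=
  let N := mdelete (mcontract (M i) (FI i))
                   (\bigcup_(j in [set j | j <> i]) FI j) in
  mloops N (mground N `\` FS i).

End Families.

(* Main.v *)
Require Import Defs.
From mathcomp Require Import all_boot.
From mathcomp Require Import boolp classical_sets.
Local Open Scope classical_set_scope.
Set Implicit Arguments. Unset Strict Implicit.

Ltac su := unfold setD, setU, setI, set1, bigcup, setT, set0, subset, mkset in *; cbv beta in *.


Lemma eqset {T : Type} (A : set T) (B : set T) : A `<=` B -> B `<=` A -> A = B.
Proof. by move=> h1 h2; apply/seteqP; split. Qed.

Lemma neq_ex {T : Type} (A : set T) (B : set T) : A `<=` B -> A <> B -> exists x, B x /\ ~ A x.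
Proof.
move=> sAB nAB; apply: contrapT => hn; apply: nAB; apply: eqset => // x Bx.
by apply: contrapT => nA; apply: hn; exists x.
Qed.

Lemma m_gr {T : Type} (M : matroid T) (I : set T) : is_matroid M -> mindep M I -> I `<=` mground M.
Proof. by case=> h _ _ _ _; apply: h. Qed.
Lemma m_0 {T : Type} (M : matroid T) : is_matroid M -> mindep M set0.
Proof. by case. Qed.
Lemma m_sub {T : Type} (M : matroid T) (I : set T) (J : set T) : is_matroid M -> mindep M J -> I `<=` J -> mindep M I.
Proof. by case=> _ _ h _ _; apply: h. Qed.
Lemma m_aug {T : Type} (M : matroid T) (I : set T) (B : set T) : is_matroid M -> mindep M I -> ~ is_base M I -> is_base M B ->
  exists x, [/\ B x, ~ I x & mindep M (x |` I)].
Proof.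
case=> _ _ _ h _ hI nb bB; have [x + hx] := h I B hI nb bB.
by rewrite in_setE => -[] ? ?; exists x.
Qed.
Lemma m_ext {T : Type} (M : matroid T) (X : set T) (I : set T) : is_matroid M -> X `<=` mground M -> mindep M I -> I `<=` X ->
  exists B, I `<=` B /\ maxindep_in M X B.
Proof. by case=> _ _ _ _ h; apply: h. Qed.

Lemma max_mem {T : Type} (M : matroid T) (W : set T) (B : set T) y : maxindep_in M W B -> W y -> mindep M (y |` B) -> B y.
Proof.
case=> sBW iB mB Wy iyB.
have e : y |` B = B.
  apply: mB => //; su; first by move=> x [->|/sBW].
by rewrite -e; left.
Qed.

Lemma not_max {T : Type} (M : matroid T) (W : set T) (I : set T) : is_matroid M -> mindep M I -> I `<=` W -> ~ maxindep_in M W I ->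
  exists z, [/\ W z, ~ I z & mindep M (z |` I)].
Proof.
move=> hM iI sIW nm; apply: contrapT => hn; apply: nm; split=> // B' iB' sIB sBW.
apply: contrapT => neq; have [z [Bz nIz]] := neq_ex sIB (nesym neq).
apply: hn; exists z; split=> //; first exact: sBW.
by apply: (m_sub hM iB'); su; move=> x [->|/sIB].
Qed.

Lemma base_sup {T : Type} (M : matroid T) (B : set T) (J : set T) : is_matroid M -> is_base M B -> mindep M J -> B `<=` J -> J = B.
Proof. by move=> hM [_ _ h] iJ sBJ; apply: h => //; apply: m_gr. Qed.

Lemma maxin_base {T : Type} (M : matroid T) (W : set T) (B : set T) (J : set T) : is_matroid M -> is_base M B -> B `<=` W ->
  maxindep_in M W J -> is_base M J.
Proof.
move=> hM bB sBW mJ; have [sJW iJ _] := mJ.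
apply: contrapT => nb; have [x [Bx nJx ixJ]] := m_aug hM iJ nb bB.
by apply: nJx; apply: max_mem mJ (sBW x Bx) ixJ.
Qed.

Lemma aug_in {T : Type} (M : matroid T) (Z : set T) (B : set T) (I : set T) : is_matroid M -> Z `<=` mground M -> maxindep_in M Z B ->
  mindep M I -> I `<=` Z -> ~ maxindep_in M Z I ->
  exists x, [/\ B x, ~ I x & mindep M (x |` I)].
Proof.
move=> hM sZ mB iI sIZ nm; apply: contrapT => H.
have H' : forall x, B x -> ~ I x -> ~ mindep M (x |` I).
  by move=> x bx nix ix; apply: H; exists x.
have [z [Zz nIz izI]] := not_max hM iI sIZ nm.
have [sBZ iB _] := mB.
have [BB [sBBB mBB]] : exists BB, B `<=` BB /\ is_base M BB.
  by apply: m_ext => // x /sBZ /sZ.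
have [_ iBB _] := mBB.
have BBZ : forall y, BB y -> Z y -> B y.
  move=> y BBy Zy; apply: max_mem mB Zy _; apply: (m_sub hM iBB).
  by su; move=> x [->|/sBBB].
have sW1 : ((z |` I) `|` BB) `<=` mground M.
  by su; move=> x [/(m_gr hM izI)|/(m_gr hM iBB)].
have [J [sJ mJ]] := m_ext hM sW1 izI (fun x h => or_introl h).
have bJ : is_base M J by apply: (maxin_base hM mBB _ mJ); su; move=> x h; right.
have [sJW1 iJ _] := mJ.
have JZ : forall y, J y -> Z y -> (z |` I) y.
  move=> y Jy Zy; case: (sJW1 y Jy) => // /BBZ /(_ Zy) By.
  apply: contrapT => nzI; apply: (H' y By); first by move=> Iy; apply: nzI; right.
  by apply: (m_sub hM iJ); su; move=> x [->|Ix] //; apply: sJ; right.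
have sW2 : (I `|` BB) `<=` mground M.
  by su; move=> x [/(m_gr hM iI)|/(m_gr hM iBB)].
have [K [sK mK]] := m_ext hM sW2 iI (fun x h => or_introl h).
have bK : is_base M K by apply: (maxin_base hM mBB _ mK); su; move=> x h; right.
have [sKW2 iK _] := mK.
have KZ : forall y, K y -> Z y -> I y.
  move=> y Ky Zy; case: (sKW2 y Ky) => // /BBZ /(_ Zy) By.
  apply: contrapT => nI; apply: (H' y By nI).
  by apply: (m_sub hM iK); su; move=> x [->|Ix] //; apply: sK.
have sL : (B `|` (J `\` Z)) `<=` BB.
  su; move=> x [/sBBB //|[Jx nZx]]; case: (sJW1 x Jx) => // [[]] ; su.
    by move=> xz; subst x.
  by move=> /sIZ.
have iL := m_sub hM iBB sL.
have bL : is_base M (B `|` (J `\` Z)).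
  apply: contrapT => nb; have [y [Jy nLy iyL]] := m_aug hM iL nb bJ.
  have Zy : Z y by apply: contrapT => nZy; apply: nLy; right.
  have By : B y.
    by apply: max_mem mB Zy _; apply: (m_sub hM iyL); su; move=> x [->|Bx]; [left|right; left].
  by apply: nLy; left.
have eBB := base_sup hM bL iBB sL.
have KJ : K `<=` J.
  move=> y Ky; case: (pselect (Z y)) => [Zy|nZy].
    by apply: sJ; right; apply: KZ.
  case: (sKW2 y Ky) => [/sIZ //|].
  rewrite eBB; case=> [/sBZ //|[]] //.
have eJK := base_sup hM bK iJ KJ.
have Jz : J z by apply: sJ; left.
by apply: nIz; apply: KZ => //; rewrite -eJK.
Qed.

Definition fund {T : Type} (N : matroid T) (A : set T) e := e |` [set a | A a /\ mindep N (e |` (A `\ a))].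

Lemma fund_circuit {T : Type} (N : matroid T) (A : set T) e :
  (forall I J, mindep N J -> I `<=` J -> mindep N I) ->
  (forall I, mindep N I -> I `<=` mground N) ->
  mindep N A -> mground N e -> ~ mindep N (fund N A e) -> is_circuit N (fund N A e).
Proof.
move=> hdown hgr iA eE nC; split=> //.
  by rewrite /fund; su; move=> x [-> //|[Ax _]]; apply: hgr iA x Ax.
move=> D sD nD; have [c [Cc nDc]] := neq_ex sD nD.
move: Cc; rewrite /fund; su; case=> [ce|[Ac iAc]].
  subst c; apply: (hdown _ _ iA) => x Dx.
  case: (sD x Dx) => [xe|[Ax _]] //.
  by exfalso; apply: nDc; rewrite -xe.
apply: (hdown _ _ iAc) => x Dx.
case: (sD x Dx) => [xe|[Ax _]]; [by left|right; split=> // xc].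
by apply: nDc; rewrite -xc.
Qed.

Lemma spans_fund {T : Type} (N : matroid T) (A : set T) e :
  (forall I J, mindep N J -> I `<=` J -> mindep N I) ->
  (forall I, mindep N I -> I `<=` mground N) ->
  mindep N A -> mground N e -> ~ mindep N (fund N A e) -> spans N A e.
Proof.
move=> hdown hgr iA eE nC; right; exists (fund N A e); split.
- exact: fund_circuit.
- by rewrite in_setE; left.
- by rewrite /fund; su; move=> x [[->|[]]] //.
Qed.

Lemma fund_dep {T : Type} (M : matroid T) (A : set T) e : is_matroid M -> mindep M A -> ~ mindep M (e |` A) ->
  ~ mindep M (fund M A e).
Proof.
move=> hM iA nd iC.
have eE : mground M e by apply: (m_gr hM iC); left.
have sZ : (e |` A) `<=` mground M by su; move=> x [->//|/(m_gr hM iA)].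
have sCZ : fund M A e `<=` e |` A by rewrite /fund; su; move=> x [->|[]]; [left|right].
have [B [sCB mB]] := m_ext hM sZ iC sCZ.
have [sBZ iB _] := mB.
have [a [Za nBa]] : exists a, (e |` A) a /\ ~ B a.
  by apply: neq_ex => // eq; apply: nd; rewrite -eq.
have eB : B e by apply: sCB; left.
have Aa : A a by case: Za => // ae; su; subst a.
have nia : ~ mindep M (e |` (A `\ a)).
  by move=> h; apply: nBa; apply: sCB; right.
have iI : mindep M (A `\ a) by apply: (m_sub hM iA); su; move=> x [].
have sIZ : (A `\ a) `<=` e |` A by su; move=> x [? _]; right.
have nmI : ~ maxindep_in M (e |` A) (A `\ a).
  case=> _ _ h; have := h A iA (fun x (hx : (A `\ a) x) => proj1 hx) (fun x h => or_intror h).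
  move=> /(congr1 (fun S => S a)) eqa; have : (A `\ a) a by rewrite -eqa.
  by su; case.
have [x [Bx nIx ixI]] := aug_in hM sZ mB iI sIZ nmI.
case: (sBZ x Bx) => [xe|Ax]; first by su; subst x.
have xa : x = a by apply: contrapT => xa; apply: nIx; su; split.
by subst x.
Qed.

Lemma span_dep {T : Type} (M : matroid T) (A : set T) e : is_matroid M -> mindep M A -> mground M e ->
  ~ mindep M (e |` A) -> spans M A e.
Proof.
move=> hM iA eE nd; apply: spans_fund => //.
- by move=> I J; apply: m_sub.
- by move=> I; apply: m_gr.
- exact: fund_dep.
Qed.

Lemma dep_span {T : Type} (N : matroid T) (A : set T) e :
  (forall I J, mindep N J -> I `<=` J -> mindep N I) ->
  ~ A e -> spans N A e -> ~ mindep N (e |` A).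
Proof.
move=> hdown nAe [|[C [[_ nC _] eC sC]]]; first by rewrite in_setE.
move=> ie; apply: nC; apply: (hdown _ _ ie) => x Cx.
rewrite in_setE in eC.
case: (pselect (x = e)) => [->|ne]; first by left.
by right; apply: sC; su; split.
Qed.

Lemma spans_mono {T : Type} (N : matroid T) (A : set T) A' e : A `<=` A' -> spans N A e -> spans N A' e.
Proof.
move=> sAA' [|[C [cC eC sC]]].
  by rewrite !in_setE => /sAA' h; left; rewrite in_setE.
by right; exists C; split=> // x /sC /sAA'.
Qed.

Lemma BAS {T : Type} (M : matroid T) (Y : set T) (B : set T) B0 e : is_matroid M -> Y `<=` mground M ->
  maxindep_in M Y B -> maxindep_in M Y B0 -> ~ Y e ->
  mindep M (e |` B) -> mindep M (e |` B0).
Proof.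
move=> hM sY mB mB0 nYe ieB; apply: contrapT => nd.
have eE : mground M e by apply: (m_gr hM ieB); left.
have sZ : (e |` Y) `<=` mground M by su; move=> x [->//|/sY].
have [sB0Y iB0 _] := mB0.
have [sBY iB _] := mB.
have mB0' : maxindep_in M (e |` Y) B0.
  split=> //; first by su; move=> x /sB0Y; right.
  move=> B' iB' sB0B' sB'Y; apply: eqset => // y B'y.
  case: (sB'Y y B'y) => [ye|Yy].
    su; subst y; exfalso; apply: nd; apply: (m_sub hM iB').
    by su; move=> x [->|/sB0B'].
  apply: max_mem mB0 Yy _; apply: (m_sub hM iB').
  by su; move=> x [->|/sB0B'].
have nmB : ~ maxindep_in M (e |` Y) B.
  have sEB : e |` B `<=` e |` Y by su; move=> x [->|/sBY]; [left|right].
  case=> _ _ h; have eq := h _ ieB (fun x h => or_intror h) sEB.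
  by apply: nYe; apply: sBY; rewrite -eq; left.
have sBY' : B `<=` e |` Y by su; move=> x /sBY; right.
have [x [B0x nBx ixB]] := aug_in hM sZ mB0' iB sBY' nmB.
by apply: nBx; apply: max_mem mB (sB0Y x B0x) ixB.
Qed.

Lemma SPB {T : Type} (M : matroid T) (Y : set T) (B : set T) e : is_matroid M -> Y `<=` mground M -> maxindep_in M Y B ->
  ~ Y e -> spans M Y e -> ~ mindep M (e |` B).
Proof.
move=> hM sY mB nYe [|[C [[sCg nC pC] eC sC]]]; first by rewrite in_setE.
rewrite in_setE in eC.
have iCe : mindep M (C `\ e).
  apply: pC; first by su; move=> x [].
  move=> /(congr1 (fun S => S e)) h; have : (C `\ e) e by rewrite h.
  by su; case.
have [B1 [s1 mB1]] := m_ext hM sY iCe sC.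
move=> ieB; have := BAS hM sY mB mB1 nYe ieB.
move=> h; apply: nC; apply: (m_sub hM h) => x Cx.
case: (pselect (x = e)) => [->|ne]; first by left.
by right; apply: s1; su; split.
Qed.

Lemma TR {T : Type} (M : matroid T) (A : set T) (Z : set T) e : is_matroid M -> A `<=` mground M -> Z `<=` mground M ->
  (forall z, Z z -> spans M A z) -> spans M Z e -> spans M A e.
Proof.
move=> hM sA sZ hZ hsp.
case: (pselect (A e)) => [Ae|nAe]; first by left; rewrite in_setE.
case: (pselect (Z e)) => [Ze|nZe]; first exact: hZ.
have [B [_ mB]] := m_ext hM sA (m_0 hM) (fun x (h : set0 x) => False_ind _ h).
have [sBA iB _] := mB.
have sAZ : (A `|` Z) `<=` mground M by su; move=> x [/sA|/sZ].
have mBU : maxindep_in M (A `|` Z) B.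
  split=> //; first by su; move=> x /sBA; left.
  move=> B' iB' sBB' sB'AZ; apply: eqset => // y B'y.
  have iyB : mindep M (y |` B) by apply: (m_sub hM iB'); su; move=> x [->|/sBB'].
  case: (pselect (A y)) => [Ay|nAy]; first exact: max_mem mB Ay iyB.
  case: (sB'AZ y B'y) => // Zy.
  by exfalso; apply: (SPB hM sA mB nAy (hZ y Zy)).
have sp' : spans M (A `|` Z) e by apply: spans_mono hsp; su; move=> x h; right.
have eE : mground M e.
  case: hsp => [|[C [[sCg _ _] eC _]]]; first by rewrite in_setE.
  by rewrite in_setE in eC; apply: sCg.
have nd := SPB hM sAZ mBU (fun h => match h with or_introl a => nAe a | or_intror z => nZe z end) sp'.
exact: spans_mono sBA (span_dep hM iB eE nd).
Qed.

Lemma EX {T : Type} (M : matroid T) P P' (Z : set T) : is_matroid M -> mindep M P -> mindep M P' ->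
  mindep M (P' `|` Z) -> (forall p, P p -> spans M P' p) ->
  (forall p, P' p -> spans M P p) -> (Z `&` P') `<=` P -> mindep M (P `|` Z).
Proof.
move=> hM iP iP' iP'Z hPP' hP'P hZP.
have hd : forall I J, mindep M J -> I `<=` J -> mindep M I by move=> I J; apply: m_sub.
have sY : (P `|` P' `|` Z) `<=` mground M.
  su; move=> x [[/(m_gr hM iP)|/(m_gr hM iP')]|Zx] //.
  by apply: (m_gr hM iP'Z); right.
have sPZ : (P `|` Z) `<=` mground M by su; move=> x [Px|Zx]; apply: sY; [left; left|right].
have [B [sPB mB]] := m_ext hM sPZ iP (fun x h => or_introl h).
have [sB iB _] := mB.
have mBY : maxindep_in M (P `|` P' `|` Z) B.
  split=> //; first by su; move=> x /sB [Px|Zx]; [left; left|right].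
  move=> B' iB' sBB' sB'Y; apply: eqset => // y B'y.
  have iyB : mindep M (y |` B) by apply: (m_sub hM iB'); su; move=> x [->|/sBB'].
  case: (pselect ((P `|` Z) y)) => [h|h]; first exact: max_mem mB h iyB.
  have P'y : P' y.
    by case: (sB'Y y B'y) => [[Py|//]|Zy]; exfalso; apply: h; [left|right].
  have nPy : ~ P y by move=> Py; apply: h; left.
  have spB : spans M B y by apply: spans_mono sPB (hP'P y P'y).
  apply: contrapT => nBy; exact: (dep_span hd nBy spB iyB).
have ZB : Z `<=` B.
  move=> z Zz; apply: contrapT => nBz.
  have nP'z : ~ P' z by move=> P'z; apply: nBz; apply: sPB; apply: hZP.
  have sI : (P' `|` (B `&` Z)) `<=` (P' `|` Z) by su; move=> x [|[]]; [left|right].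
  have iI := m_sub hM iP'Z sI.
  have sIY : (P' `|` (B `&` Z)) `<=` (P `|` P' `|` Z).
    by su; move=> x [h|[_ h]]; [left; right|right].
  have nmI : ~ maxindep_in M (P `|` P' `|` Z) (P' `|` (B `&` Z)).
    case=> _ _ h; have := h _ iP'Z sI.
    move=> /(_ _) eq; have : (P' `|` Z) z by right.
    rewrite eq; last by su; move=> x [h'|h']; [left; right|right].
    by su; case=> [//|[]].
  have [x [Bx nIx ixI]] := aug_in hM sY mBY iI sIY nmI.
  case: (sB x Bx) => [Px|Zx]; last by apply: nIx; right.
  have nP'x : ~ P' x by move=> h; apply: nIx; left.
  apply: (dep_span hd nP'x (hPP' x Px)); apply: (m_sub hM ixI).
  by su; move=> y [->|h]; [left|right; left].
apply: (m_sub hM iB); su; move=> x [/sPB|/ZB] //.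
Qed.

Lemma CT {T : Type} (M : matroid T) (X : set T) (I : set T) : is_matroid M -> mindep M X ->
  (mindep (mcontract M X) I <-> I `<=` mground M `\` X /\ mindep M (I `|` X)).
Proof.
move=> hM iX; rewrite /mcontract /mdual /mdelete /mrestrict /is_base /=.
split.
- case=> D [[sD [[B0 [bB0 sDB0]] _] mx] sI].
  have sDX : (mground M `\` X) `\` B0 `<=` mground M `\` X by su; move=> z [h _].
  have eD : (mground M `\` X) `\` B0 = D.
    apply: mx; last exact: sDX.
      split=> //; exists B0; split=> //; by su; move=> z [[? _] ?]; split.
    su; move=> x Dx; have [Ex nXx] := sD x Dx; split=> //.
    by have [] := sDB0 x Dx.
  have sXE := m_gr hM iX.
  have [sB0E iB0 _] := bB0.
  have sW : (X `|` B0) `<=` mground M by su; move=> x [/sXE|/sB0E].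
  have [B' [sXB' mB']] := m_ext hM sW iX (fun x h => or_introl h).
  have bB' := maxin_base hM bB0 (fun x h => or_intror h) mB'.
  have [sB'W iB' _] := mB'.
  have eD1 : (mground M `\` X) `\` B' = D.
    apply: mx.
    - split; first by exists B'; split=> //; by su; move=> z [[? _] ?]; split.
      by su; move=> z [h _].
    - rewrite -eD; su; move=> x [[Ex nXx] nB0x]; split=> // B'x.
      by case: (sB'W x B'x).
    - by su; move=> z [h _].
  have sB0B' : B0 `<=` B'.
    move=> y B0y; case: (pselect (X y)) => [Xy|nXy]; first exact: sXB'.
    apply: contrapT => nB'y.
    have : D y by rewrite -eD1; su; split=> //; split=> //; apply: sB0E.
    by rewrite -eD; su; case.
  have eB := base_sup hM bB0 iB' sB0B'.
  have sIB0 : I `<=` B0.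
    move=> y Iy; have [[Ey nXy] nDy] := sI y Iy.
    apply: contrapT => nB0y; apply: nDy; rewrite -eD; su; split=> //.
  split; first by su; move=> x /sI [].
  apply: (m_sub hM iB0); su; move=> x [/sIB0 //|Xx]; rewrite -eB; exact: sXB'.
- case=> sI iIX.
  have [B0 [sIXB0 bB0]] := m_ext hM (fun x h => h) iIX (m_gr hM iIX).
  have [sB0E iB0 _] := bB0.
  exists ((mground M `\` X) `\` B0); split; last first.
    su; move=> y Iy; have [Ey nXy] := sI y Iy; split; first by split.
    by move=> [_]; apply; apply: sIXB0; left.
  split.
  + by su; move=> z [h _].
  + split; last by su; move=> z [h _].
    by exists B0; split=> //; by su; move=> z [[? _] ?]; split.
  + move=> D' [[B' [bB' sD'B']] sD'X] sDD' _.
    apply: eqset => // d D'd.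
    have [Ed nXd] := sD'X d D'd.
    split=> //; move=> B0d.
    have [_ nB'd] := sD'B' d D'd.
    have [sB'E iB' _] := bB'.
    have sI0 : (X `|` (B' `\` X)) `<=` B0.
      su; move=> y [Xy|[B'y nXy]]; first by apply: sIXB0; right.
      apply: contrapT => nB0y.
      have : D' y by apply: sDD'; su; split=> //; split=> //; apply: sB'E.
      by move=> /sD'B' [].
    have iI0 := m_sub hM iB0 sI0.
    have nb : ~ is_base M (X `|` (B' `\` X)).
      move=> bI0; have eq := base_sup hM bI0 iB0 sI0.
      have : (X `|` (B' `\` X)) d by rewrite -eq.
      by su; case=> [//|[]].
    have [y [B'y nI0y _]] := m_aug hM iI0 nb bB'.
    apply: nI0y; case: (pselect (X y)) => [Xy|nXy]; [left|right] => //.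
Qed.

Lemma MF T K (M : K -> matroid T) E FI FS i I :
  is_matroid (M i) -> mground (M i) = E -> mindep (M i) (FI i) ->
  (mindep (minorF M FI FS i) I <->
   [/\ I `<=` E `\` \bigcup_j FI j, I `<=` FS i & mindep (M i) (I `|` FI i)]).
Proof.
move=> hM gE iF; rewrite /minorF /mloops /mdelete /mrestrict; cbn [mindep mground].
have -> : mground (mcontract (M i) (FI i)) = mground (M i) `\` FI i by [].
rewrite CT // gE.
split.
- case=> [[[sI iIX] sIU] sIS]; split=> //.
  + su; move=> x Ix; have [Ex nFx] := sI x Ix; split=> // -[j _ Fjx].
    case: (pselect (j = i)) => [ji|nji]; first by subst j.
    have [_ nU] := sIU x Ix; apply: nU; exists j => //.
  + by su; move=> x Ix; have [g h] := sIS x Ix; apply: contrapT => nF; apply: h; split.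
- case=> sI sIS iIX.
  have h1 : I `<=` (E `\` FI i) `\` \bigcup_(j in [set j | j <> i]) FI j.
    su; move=> x Ix; have [Ex nU] := sI x Ix; split.
      by split=> // Fx; apply: nU; exists i.
    by move=> [j nji Fjx]; apply: nU; exists j.
  split; first split; first split.
  + by su; move=> x /h1 [].
  + exact: iIX.
  + exact: h1.
  + move=> x Ix; split; first exact: h1.
    by su; move=> [_ h]; apply: h; apply: sIS.
Qed.

Lemma RMi T K (M : K -> matroid T) E FI FS i Y0 W :
  is_matroid (M i) -> mground (M i) = E -> mindep (M i) (FI i) ->
  (mindep (mrestrict (minorF M FI FS i) Y0) W <->
   [/\ W `<=` Y0, W `<=` E `\` \bigcup_j FI j, W `<=` FS i & mindep (M i) (W `|` FI i)]).
Proof.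
move=> hm gE iF; rewrite /mrestrict; cbn [mindep]; rewrite MF //.
rewrite gE; split; [case=> -[a b c] d; split | case=> a b c d; split; [split|]] => //.
Qed.

Lemma RM_down T K (M : K -> matroid T) E FI FS i Y0 W W' :
  is_matroid (M i) -> mground (M i) = E -> mindep (M i) (FI i) ->
  mindep (mrestrict (minorF M FI FS i) Y0) W -> W' `<=` W ->
  mindep (mrestrict (minorF M FI FS i) Y0) W'.
Proof.
move=> hm gE iF /(RMi _ _ _ hm gE iF) [s1 s2 s3 s4] sW; apply/(RMi _ _ _ hm gE iF); split.
- by move=> x /sW /s1.
- by move=> x /sW /s2.
- by move=> x /sW /s3.
- by apply: (m_sub hm s4); su; move=> x [/sW|]; [left|right].
Qed.

Lemma DepM T K (M : K -> matroid T) E FI FS i Y0 W e :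
  is_matroid (M i) -> mground (M i) = E -> mindep (M i) (FI i) ->
  Y0 `<=` E `\` \bigcup_j FI j ->
  mindep (mrestrict (minorF M FI FS i) Y0) W ->
  spanning (mrestrict (minorF M FI FS i) Y0) W ->
  Y0 e -> ~ W e -> FS i e -> ~ mindep (M i) (e |` (FI i `|` W)).
Proof.
move=> hm gE iF sY iW [_ hsp] Ye nWe FSe ie.
have := hsp e; rewrite in_setE => /(_ Ye) sp.
have hd : forall I J, mindep (mrestrict (minorF M FI FS i) Y0) J -> I `<=` J ->
   mindep (mrestrict (minorF M FI FS i) Y0) I.
  by move=> I J; apply: RM_down.
apply: (dep_span hd nWe sp).
have [s1 s2 s3 s4] := (RMi _ _ _ hm gE iF).1 iW.
apply/(RMi _ _ _ hm gE iF); split.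
- by su; move=> x [->|/s1].
- by su; move=> x [->|/s2]; [apply: sY|].
- by su; move=> x [->|/s3].
- by apply: (m_sub hm ie); su; move=> x [[->|]|]; [left|right; right|right; left].
Qed.

Lemma Dlem T K (M : K -> matroid T) E FI FS i Y0 W e :
  is_matroid (M i) -> mground (M i) = E -> mindep (M i) (FI i) ->
  Y0 `<=` E `\` \bigcup_j FI j ->
  mindep (mrestrict (minorF M FI FS i) Y0) W ->
  spanning (mrestrict (minorF M FI FS i) Y0) W ->
  Y0 e -> FS i e -> spans (M i) (FI i `|` W) e.
Proof.
move=> hm gE iF sY iW spW Ye FSe.
case: (pselect (W e)) => [We|nWe]; first by left; rewrite in_setE; right.
apply: span_dep => //.
- have [_ _ _ s4] := (RMi _ _ _ hm gE iF).1 iW.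
  by apply: (m_sub hm s4); su; move=> x [|]; [right|left].
- by rewrite gE; have [] := sY e Ye.
- exact: (DepM hm gE iF sY iW spW).
Qed.

Lemma Sconv T K (M : K -> matroid T) E FI FS i Y0 W :
  is_matroid (M i) -> mground (M i) = E -> mindep (M i) (FI i) ->
  Y0 `<=` E `\` \bigcup_j FI j ->
  mindep (mrestrict (minorF M FI FS i) Y0) W ->
  (forall e, Y0 e -> ~ W e -> FS i e -> ~ mindep (M i) (e |` (FI i `|` W))) ->
  spanning (mrestrict (minorF M FI FS i) Y0) W.
Proof.
move=> hm gE iF sY iW H.
have [s1 s2 s3 s4] := (RMi _ _ _ hm gE iF).1 iW.
split=> // e; rewrite in_setE => Ye.
case: (pselect (W e)) => [We|nWe]; first by left; rewrite in_setE.
have hd : forall I J, mindep (mrestrict (minorF M FI FS i) Y0) J -> I `<=` J ->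
   mindep (mrestrict (minorF M FI FS i) Y0) I.
  by move=> I J; apply: RM_down.
apply: spans_fund => //.
  by move=> I /(RMi _ _ _ hm gE iF) [].
move=> ifd; have [f1 f2 f3 f4] := (RMi _ _ _ hm gE iF).1 ifd.
have FSe : FS i e by apply: f3; rewrite /fund; left.
have iA : mindep (M i) (FI i `|` W) by apply: (m_sub hm s4); su; move=> x [|]; [right|left].
apply: (fund_dep hm iA (H e Ye nWe FSe)).
apply: (m_sub hm f4); rewrite /fund; su.
move=> x [->|[[Fx|Wx] ix]]; first by left; left.
  by right.
left; right; split=> //.
apply/(RMi _ _ _ hm gE iF); split.
- by su; move=> y [->|[/s1]].
- by su; move=> y [->|[/s2]] //; apply: sY.
- by su; move=> y [->|[/s3]].
- apply: (m_sub hm ix); su; move=> y [[->|[Wy nyx]]|Fy]; first by left.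
    by right; split=> //; right.
  right; split; first by left.
  move=> yx; su; subst y; have [_ h] := s2 x Wx; by apply: h; exists i.
Qed.

Lemma inT T (k : T) : (@setT T) k. Proof. by []. Qed.

Theorem lemma3p11 (T K : Type) (E : set T) (M : K -> matroid T)
  (FI FS : K -> set T) (X : set T) (R : K -> set T) :
  (forall i, is_matroid (M i) /\ mground (M i) = E) ->
  is_family M E FI FS ->
  feasible M E FI FS ->
  tight_set (minorF M FI FS) (E `\` \bigcup_j FI j) X ->
  is_covering (fun i => mrestrict (minorF M FI FS i) X) X R ->
  let FI' := fun i => FI i `|` R i in
  [/\ is_family M E FI' FS,
      is_extension FI FS FI' FS,
      feasible M E FI' FS,
      (forall i e, e \in X `&` FS i -> spans (M i) (FI' i) e) &
      ((forall Y, tight_set (minorF M FI FS) (E `\` \bigcup_j FI j) Y ->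
          Y `<=` X) ->
       forall Y, tight_set (minorF M FI' FS) (E `\` \bigcup_j FI' j) Y ->
          Y = set0)].
Proof.
move=> hM hF hfeas ht hcov FI'.
have hm : forall i, is_matroid (M i) := fun i => (hM i).1.
have gE : forall i, mground (M i) = E := fun i => (hM i).2.
case: hF => hFS iF hSp hdisj hU.
case: hfeas => [[R0 [[iR0 uR0] hR0]] [P0 [[dP0 sP0] hP0]]].
case: ht => sXG [_ htf].
case: hcov => iR uR.
have hRi : forall i, [/\ R i `<=` X, R i `<=` E `\` \bigcup_j FI j, R i `<=` FS i
    & mindep (M i) (R i `|` FI i)].
  by move=> i; apply: (RMi _ _ _ (hm i) (gE i) (iF i)).1 (iR i).
have spR : forall i, spanning (mrestrict (minorF M FI FS i) X) (R i).
  by apply: htf; split.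
have spansR : forall i e, X e -> FS i e -> spans (M i) (FI i `|` R i) e.
  by move=> i e; apply: Dlem (hm i) (gE i) (iF i) sXG (iR i) (spR i).
have XnF : forall x, X x -> forall j, ~ FI j x.
  by move=> x /sXG [_ h] j Fx; apply: h; exists j.
have RX : forall i x, R i x -> X x by move=> i x; have [h _ _ _] := hRi i; apply: h.
have disR : forall i j x, i <> j -> R i x -> R j x -> False.
  move=> i j e nij Rie Rje.
  pose R' := fun k => [set x | R k x /\ ~ (x = e /\ k = j)].
  have cR' : is_covering (fun k => mrestrict (minorF M FI FS k) X) X R'.
    split.
      by move=> k; apply: RM_down (hm k) (gE k) (iF k) (iR k) _ => x [].
    apply: eqset; first by move=> x [k _ [Rkx _]]; apply: RX Rkx.
    move=> x Xx; rewrite -uR in Xx; case: Xx => k _ Rkx.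
    case: (pselect (x = e /\ k = j)) => [[xe kj]|h].
      by exists i; [apply: inT|split; [rewrite xe|case=> _]].
    by exists k; [apply: inT|split].
  have [_ hsp] := htf R' cR' j.
  have := hsp e; rewrite in_setE => /(_ (RX _ _ Rie)) sp.
  have nR'e : ~ R' j e by case=> _ []; split.
  have hd : forall I J, mindep (mrestrict (minorF M FI FS j) X) J -> I `<=` J ->
     mindep (mrestrict (minorF M FI FS j) X) I.
    by move=> I J; apply: RM_down (hm j) (gE j) (iF j).
  apply: (dep_span hd nR'e sp); apply: RM_down (hm j) (gE j) (iF j) (iR j) _.
  by su; move=> x [->|[]].
have disF' : forall i j x, i <> j -> FI' i x -> FI' j x -> False.
  move=> i j x nij; rewrite /FI'; su.
  case=> [Fi|Ri] [Fj|Rj].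
  - have := hdisj i j nij; move=> /(congr1 (fun S => S x)).
    by rewrite /setI /set0 /mkset => <-; split.
  - exact: XnF (RX _ _ Rj) i Fi.
  - exact: XnF (RX _ _ Ri) j Fj.
  - exact: disR i j x nij Ri Rj.
have iF' : forall i, mindep (M i) (FI' i).
  by move=> i; have [_ _ _ h] := hRi i; apply: (m_sub (hm i) h); rewrite /FI'; su; move=> x [|]; [right|left].
have sF'S : forall i, FI' i `<=` FS i.
  by move=> i; have [_ _ h _] := hRi i; rewrite /FI'; su; move=> x [/(proj1 (hFS i))|/h].
have part1 : is_family M E FI' FS.
  split=> //.
  - by move=> i; split; [apply: sF'S|apply: (proj2 (hFS i))].
  - move=> i j nij; apply: eqset => x //; su; case=> h1 h2.
    exact: disF' i j x nij h1 h2.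
have part2 : is_extension FI FS FI' FS.
  move=> i; split; [rewrite /FI'; su; move=> x h; by left|apply: sF'S|by []].
split=> //.
- have sFE : forall i, FS i `<=` E by move=> i; apply: (proj2 (hFS i)).
  split.
  + pose Q := fun k => R0 k `&` X.
    have iQ : forall k, mindep (mrestrict (minorF M FI FS k) X) (Q k).
      move=> k; apply/(RMi _ _ _ (hm k) (gE k) (iF k)); split.
      * by move=> x [].
      * by move=> x [_ /sXG].
      * by move=> x [/(proj2 (hR0 k))].
      * apply: (m_sub (hm k) (iR0 k)); su; move=> x [[]//|/(proj1 (hR0 k))] //.
    have cQ : is_covering (fun k => mrestrict (minorF M FI FS k) X) X Q.
      split=> //; apply: eqset; first by move=> x [k _ []].
      move=> x Xx; have Ex : E x by have [] := sXG x Xx.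
      by rewrite -uR0 in Ex; case: Ex => k _ R0x; exists k; [apply: inT|split].
    have spQ := htf Q cQ.
    have spansQ : forall i e, X e -> FS i e -> spans (M i) (FI i `|` Q i) e.
      by move=> i e; apply: Dlem (hm i) (gE i) (iF i) sXG (iQ i) (spQ i).
    exists (fun i => FI' i `|` (R0 i `\` X)); split; first split.
    * move=> i.
      have sP' : (FI i `|` Q i) `<=` R0 i by su; move=> x [/(proj1 (hR0 i))|[]].
      have sP'Z : ((FI i `|` Q i) `|` (R0 i `\` X)) `<=` R0 i.
        by su; move=> x [/sP'|[]].
      apply: (EX (hm i) (iF' i) (m_sub (hm i) (iR0 i) sP') (m_sub (hm i) (iR0 i) sP'Z)).
      - rewrite /FI' => p; su; case=> [Fp|Rp]; first by left; rewrite in_setE; left.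
        by apply: spansQ; [apply: RX Rp|have [_ _ h _] := hRi i; apply: h].
      - move=> p; su; case=> [Fp|[R0p Xp]]; first by left; rewrite in_setE; left.
        by apply: spansR => //; apply: (proj2 (hR0 i)).
      - by rewrite /FI'; su; move=> x [[R0x nXx] [Fx|[_ Xx]]]; [left|].
    * apply: eqset.
        move=> x [k _]; su; case=> [/sF'S /sFE|[/(proj2 (hR0 k)) /sFE]] //.
      move=> x Ex; have Ex' := Ex; rewrite -uR0 in Ex'; case: Ex' => k _ R0x.
      case: (pselect (X x)) => [Xx|nXx].
        rewrite -uR in Xx; case: Xx => j _ Rjx.
        by exists j; [apply: inT|left; right].
      by exists k; [apply: inT|right; split].
    * move=> i; split; first by move=> x h; left.
      by su; move=> x [/sF'S|[/(proj2 (hR0 i))]].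
  + have dP : forall i j x, i <> j -> P0 i x -> P0 j x -> False.
      move=> i j x nij h1 h2; have := dP0 i j nij; move=> /(congr1 (fun S => S x)).
      by rewrite /setI /set0 /mkset => <-; split.
    have F'P : forall i x, FI' i x -> ~ X x -> P0 i x.
      by move=> i x; rewrite /FI'; su; case=> [/(proj1 (hP0 i))|/RX].
    exists (fun i => FI' i `|` (P0 i `\` X)); split; first split.
    * move=> i j nij; apply: eqset => x //; su; case.
      case=> [F'i|[P0i nXi]] [F'j|[P0j nXj]].
      - exact: disF' F'i F'j.
      - exact: dP i j x nij (F'P i x F'i nXj) P0j.
      - exact: dP i j x nij P0i (F'P j x F'j nXi).
      - exact: dP i j x nij P0i P0j.
    * move=> i; have [sP0g hsp] := sP0 i.
      have sA : (FI' i `|` (P0 i `\` X)) `<=` mground (M i).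
        by rewrite gE; su; move=> x [/sF'S /sFE|[/(proj2 (hP0 i)) /sFE]].
      split=> // e he; apply: (TR (hm i) sA sP0g _ (hsp e he)).
      move=> z P0z; case: (pselect (X z)) => [Xz|nXz].
        apply: spans_mono (spansR i z Xz (proj2 (hP0 i) z P0z)).
        by move=> x h; left.
      by left; rewrite in_setE; right; split.
    * move=> i; split; first by move=> x h; left.
      by su; move=> x [/sF'S|[/(proj2 (hP0 i))]].
- by move=> i e; rewrite in_setE; case=> Xe FSe; apply: spansR.
- move=> hmax Y [sYG' [[Q' [iQ' uQ']] htY]].
  have YnX : forall y, Y y -> ~ X y.
    move=> y Yy Xy; have [_ h] := sYG' y Yy; rewrite -uR in Xy.
    by case: Xy => j _ Rjy; apply: h; exists j; [apply: inT|right].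
  have YG : Y `<=` E `\` \bigcup_j FI j.
    move=> y Yy; have [Ey h] := sYG' y Yy; split=> // -[j _ Fjy].
    by apply: h; exists j; [apply: inT|left].
  have sXYG : (X `|` Y) `<=` E `\` \bigcup_j FI j by move=> x [/sXG|/YG].
  have tXY : tight_set (minorF M FI FS) (E `\` \bigcup_j FI j) (X `|` Y).
    split=> //; split.
    + exists (fun k => R k `|` Q' k); split.
      * move=> k; have [q1 q2 q3 q4] := (RMi _ _ _ (hm k) (gE k) (iF' k)).1 (iQ' k).
        have [r1 r2 r3 r4] := hRi k.
        apply/(RMi _ _ _ (hm k) (gE k) (iF k)); split.
        - by move=> x [/r1|/q1]; [left|right].
        - by move=> x [/r2|/q1 /YG].
        - by move=> x [/r3|/q3].
        - apply: (m_sub (hm k) q4); rewrite /FI'; su.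
          by move=> x [[Rx|Qx]|Fx]; [right; right|left|right; left].
      * apply: eqset.
          move=> x [k _ [Rx|Qx]]; first by left; apply: RX Rx.
          by right; have [q1 _ _ _] := (RMi _ _ _ (hm k) (gE k) (iF' k)).1 (iQ' k); apply: q1.
        move=> x [Xx|Yx].
          by rewrite -uR in Xx; case: Xx => k _ Rx; exists k; [apply: inT|left].
        by rewrite -uQ' in Yx; case: Yx => k _ Qx; exists k; [apply: inT|right].
    + move=> W [iW uW] i.
      have hW : forall k, [/\ W k `<=` X `|` Y, W k `<=` E `\` \bigcup_j FI j,
          W k `<=` FS k & mindep (M k) (W k `|` FI k)].
        by move=> k; apply: (RMi _ _ _ (hm k) (gE k) (iF k)).1 (iW k).
      pose Wx := fun k => W k `&` X.
      pose Wy := fun k => W k `&` Y.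
      have cWx : is_covering (fun k => mrestrict (minorF M FI FS k) X) X Wx.
        split.
          move=> k; have [w1 w2 w3 w4] := hW k.
          apply/(RMi _ _ _ (hm k) (gE k) (iF k)); split.
          - by move=> x [].
          - by move=> x [_ /sXG].
          - by move=> x [/w3].
          - by apply: (m_sub (hm k) w4); su; move=> x [[]|]; [left|right].
        apply: eqset; first by move=> x [k _ []].
        move=> x Xx; have : (X `|` Y) x by left.
        by rewrite -uW; case=> k _ Wkx; exists k; [apply: inT|split].
      have spansWx : forall k e, X e -> FS k e -> spans (M k) (FI k `|` Wx k) e.
        move=> k e; apply: Dlem (hm k) (gE k) (iF k) sXG (cWx.1 k) (htf Wx cWx k).
      have EXk : forall k Z0, mindep (M k) ((FI k `|` Wx k) `|` Z0) ->
          Z0 `&` (FI k `|` Wx k) `<=` FI' k -> mindep (M k) (FI' k `|` Z0).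
        move=> k Z0 h h3; have [w1 w2 w3 w4] := hW k.
        apply: (EX (hm k) (iF' k) (m_sub (hm k) h (fun x hx => or_introl hx)) h).
        - rewrite /FI' => p; su; case=> [Fp|Rp]; first by left; rewrite in_setE; left.
          by apply: spansWx; [apply: RX Rp|have [_ _ hh _] := hRi k; apply: hh].
        - move=> p; su; case=> [Fp|[Wp Xp]]; first by left; rewrite in_setE; left.
          by apply: spansR => //; apply: w3.
        - exact: h3.
      have cWy : is_covering (fun k => mrestrict (minorF M FI' FS k) Y) Y Wy.
        split.
          move=> k; have [w1 w2 w3 w4] := hW k.
          apply/(RMi _ _ _ (hm k) (gE k) (iF' k)); split.
          - by move=> x [].
          - by move=> x [_ /sYG'].
          - by move=> x [/w3].
          - have hi : mindep (M k) ((FI k `|` Wx k) `|` Wy k).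
              by apply: (m_sub (hm k) w4); su; move=> x [[|[]]|[]]; [right|left|left].
            have hc : Wy k `&` (FI k `|` Wx k) `<=` FI' k.
              rewrite /FI'; su; move=> x [[_ Yx] [Fx|[_ Xx]]]; first by left.
              by exfalso; apply: (YnX x Yx).
            have h := EXk k (Wy k) hi hc.
            by apply: (m_sub (hm k) h); su; move=> x [|]; [right|left].
        apply: eqset; first by move=> x [k _ []].
        move=> x Yx; have : (X `|` Y) x by right.
        by rewrite -uW; case=> k _ Wkx; exists k; [apply: inT|split].
      have spWy := htY Wy cWy i.
      have [w1 w2 w3 w4] := hW i.
      apply: (Sconv (hm i) (gE i) (iF i) sXYG (iW i)).
      move=> e [Xe|Ye] nWe FSe.
      * have sp := spansWx i e Xe FSe.
        have nA : ~ (FI i `|` Wx i) e by case=> [/(XnF e Xe)|[]].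
        have nd := dep_span (fun I0 J0 hJ hs => m_sub (hm i) hJ hs) nA sp.
        move=> ie; apply: nd; apply: (m_sub (hm i) ie).
        by su; move=> x [->|[|[]]]; [left|right; left|right; right].
      * have nd := DepM (hm i) (gE i) (iF' i) sYG' (cWy.1 i) spWy Ye
           (fun h => nWe (proj1 h)) FSe.
        move=> ie; apply: nd.
        have h : mindep (M i) (FI' i `|` (e |` Wy i)).
          apply: EXk.
            by apply: (m_sub (hm i) ie); su; move=> x [[|[]]|[->|[]]]; [right; left|right; right|left|right; right].
          rewrite /FI'; su; move=> x [[xe|[_ Yx]] [Fx|[Wx' Xx]]]; try by left.
            by exfalso; subst x.
          by exfalso; apply: (YnX x Yx).
        by apply: (m_sub (hm i) h); su; move=> x [->|[|]]; [right; left|left|right; right].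
  have sub := hmax _ tXY.
  apply: eqset => // y Yy; exfalso; apply: (YnX y Yy).
  by apply: (sub y); right.
Qed.
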